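(* Let $1\le k\le 6$, let $\theta\in(\pi/2,\pi)$ be sufficiently close to $\pi/2$ and $\kappa>0$. For each integer $l\in\{0,1,\dots,2k\}$ there is a constant $c>0$, independent of $\tau>0$ and of $z$, such that for all $\tau>0$ and all $z\in\Gamma^\tau_{\theta,\kappa}$: $$\left|\frac{\gamma_l(e^{-z\tau})}{l!}\tau^{l+1}-\frac{1}{z^{l+1}}\right|\le\begin{cases} c\,\tau^{l+1}, & l=0 \text{ or } l\in\{1,3,\dots,2k-1\},\\ c\,\tau^{l+2}|z|, & l\in\{2,4,\dots,2k\}.\end{cases}$$
   Context: For real $p\ge 0$ let $\gamma_p(\xi)=\sum_{n=1}^\infty n^p\xi^n$ for $|\xi|<1$ (extended analytically, e.g. $\gamma_l(\xi)$ is a rational function of $\xi$ with only pole at $\xi=1$ for integer $l$). For $\theta\in(\pi/2,\pi)$ and $\kappa>0$, $\Gamma_{\theta,\kappa}=\{z\in\mathbb C:|z|=\kappa,|\arg z|\le\theta\}\cup\{z=re^{\pm i\theta}:r\ge\kappa\}$, and for $\tau>0$, $\Gamma^\tau_{\theta,\kappa}=\{z\in\Gamma_{\theta,\kappa}:|\operatorname{Im}z|\le\pi/\tau\}$. *)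

(* Defs.v *)
From Stdlib Require Import Reals List Factorial.
From Coquelicot Require Import Coquelicot.
Open Scope R_scope.

Definition Cexp (z : C) : C :=
  (exp (fst z) * cos (snd z), exp (fst z) * sin (snd z)).

(* Real polynomials as coefficient lists, lowest degree first. *)
Fixpoint peval (p : list R) (x : C) : C :=
  match p with
  | nil => RtoC 0
  | a :: t => Cplus (RtoC a) (Cmult x (peval t x))
  end.

Fixpoint padd (p q : list R) : list R :=
  match p, q with
  | nil, _ => q
  | _, nil => p
  | a :: p', b :: q' => (a + b) :: padd p' q'
  end.

Definition pscale (c : R) (p : list R) : list R := map (fun a => c * a) p.

Definition pmulX (p : list R) : list R := 0 :: p.

Fixpoint pderiv_aux (k : nat) (p : list R) : list R :=
  match p with
  | nil => nil
  | a :: t => (INR k * a) :: pderiv_aux (S k) t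
  end.

Definition pderiv (p : list R) : list R :=
  match p with
  | nil => nil
  | _ :: t => pderiv_aux 1 t
  end.

(* Numerator polynomials: gamma_l(xi) = P_l(xi) / (1 - xi)^(l+1), where
   P_0 = X and P_{l+1} = X * ( P_l' * (1 - X) + (l+1) * P_l ),
   which is the identity gamma_{l+1} = xi * d/dxi gamma_l, gamma_0 = xi/(1-xi). *)
Fixpoint gammaNum (l : nat) : list R :=
  match l with
  | O => 0 :: 1 :: nil
  | S l' =>
      pmulX (padd (padd (pderiv (gammaNum l')) (pscale (-1) (pmulX (pderiv (gammaNum l')))))
                  (pscale (INR (S l')) (gammaNum l')))
  end.

(* gamma_l(xi) = sum_{n>=1} n^l xi^n for |xi| < 1, as the rational function
   on C with only pole at xi = 1. *)
Definition gamma (l : nat) (xi : C) : C :=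
  Cdiv (peval (gammaNum l) xi) (Cpow (Cminus (RtoC 1) xi) (S l)).

Definition GammaC (theta kappa : R) (z : C) : Prop :=
  (exists phi, Rabs phi <= theta /\ z = (kappa * cos phi, kappa * sin phi)) \/
  (exists r, kappa <= r /\ (z = (r * cos theta, r * sin theta) \/
                             z = (r * cos theta, - (r * sin theta)))).

Definition GammaCtau (theta kappa tau : R) (z : C) : Prop :=
  GammaC theta kappa z /\ Rabs (snd z) <= PI / tau.

(* Main.v *)
Require Import Defs.
From Stdlib Require Import Reals Factorial.
From Coquelicot Require Import Coquelicot.
From Stdlib Require Import List Lra Lia ZArith QArith Qreals.
Open Scope R_scope.


Lemma Cexp_add a b : Cexp (Cplus a b) = Cmult (Cexp a) (Cexp b).
Proof.
  destruct a as [x y], b as [u v]; unfold Cexp, Cplus, Cmult; simpl.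
  rewrite exp_plus, cos_plus, sin_plus.
  apply injective_projections; simpl; ring.
Qed.

Lemma Cexp_0 : Cexp (RtoC 0) = RtoC 1.
Proof. unfold Cexp; simpl. rewrite exp_0, cos_0, sin_0. apply injective_projections; simpl; ring. Qed.

Lemma Cmod_Cexp z : Cmod (Cexp z) = exp (fst z).
Proof.
  destruct z as [x y]; unfold Cmod, Cexp; cbn [fst snd].
  replace ((exp x * cos y) ^ 2 + (exp x * sin y) ^ 2) with (exp x ^ 2).
  - apply sqrt_pow2. left; apply exp_pos.
  - pose proof (sin2_cos2 y) as H. unfold Rsqr in H. 
    replace (exp x ^ 2) with (exp x ^ 2 * (sin y * sin y + cos y * cos y)) by (rewrite H; ring).
    ring.
Qed.

Lemma Cexp_scal t u : Cexp (Cmult (RtoC t) u) =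
  (exp (t * fst u) * cos (t * snd u), exp (t * fst u) * sin (t * snd u)).
Proof.
  destruct u as [x y]; unfold Cexp, Cmult, RtoC; simpl.
  replace (t * x - 0 * y) with (t * x) by ring.
  replace (t * y + 0 * x) with (t * y) by ring. reflexivity.
Qed.

Fixpoint csum (m : nat) (f : nat -> C) : C :=
  match m with
  | O => RtoC 0
  | S m' => Cplus (f O) (csum m' (fun j => f (S j)))
  end.

Lemma csum_Sr m f : csum (S m) f = Cplus (csum m f) (f m).
Proof.
  revert f; induction m; intros f.
  - simpl. ring.
  - change (csum (S (S m)) f) with (Cplus (f O) (csum (S m) (fun j => f (S j)))).
    rewrite IHm. simpl. ring.
Qed.

Lemma csum_ext m f g : (forall j, (j < m)%nat -> f j = g j) -> csum m f = csum m g.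
Proof.
  revert f g; induction m; intros f g H; simpl; auto.
  rewrite (H O) by lia. f_equal. apply IHm. intros j Hj; apply H; lia.
Qed.

Lemma csum_fst m f : fst (csum m f) = 0 + fst (csum m f).
Proof. ring. Qed.

Definition Tay (m : nat) (u : C) : C :=
  csum m (fun j => Cmult (Cpow u j) (RtoC (/ INR (fact j)))).

Lemma Tay_S m u : Tay (S m) u = Cplus (Tay m u) (Cmult (Cpow u m) (RtoC (/ INR (fact m)))).
Proof. unfold Tay; apply csum_Sr. Qed.

Lemma Tay_0 m : Tay (S m) (RtoC 0) = RtoC 1.
Proof.
  unfold Tay; simpl. rewrite (csum_ext m _ (fun _ => RtoC 0)).
  - assert (forall n, csum n (fun _ => RtoC 0) = RtoC 0) as Z.
    { induction n; simpl; auto. rewrite IHn. ring. }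
    rewrite Z. apply injective_projections; simpl; field.
  - intros j _. simpl. apply injective_projections; simpl; ring.
Qed.

Lemma fst_scal a c : fst (Cmult (RtoC a) c) = a * fst c.
Proof. simpl. ring. Qed.
Lemma snd_scal a c : snd (Cmult (RtoC a) c) = a * snd c.
Proof. simpl. ring. Qed.

Lemma pow_scal t u n : Cpow (Cmult (RtoC t) u) n = Cmult (RtoC (t ^ n)) (Cpow u n).
Proof. rewrite Cpow_mult_l, RtoC_pow. reflexivity. Qed.

Lemma fact_S_inv m : INR (S m) * / INR (fact (S m)) = / INR (fact m).
Proof.
  change (fact (S m)) with (S m * fact m)%nat. rewrite mult_INR.
  pose proof (INR_fact_neq_0 m).
  field. split; auto. apply not_0_INR. lia.
Qed.


Section Proj.
Variable pr : C -> R.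
Hypothesis pr_add : forall a b, pr (Cplus a b) = pr a + pr b.
Hypothesis pr_scal : forall r c, pr (Cmult (RtoC r) c) = r * pr c.

Lemma pr_0 : pr (RtoC 0) = 0.
Proof.
  replace (RtoC 0) with (Cmult (RtoC 0) (RtoC 0)) by (apply injective_projections; simpl; ring).
  rewrite pr_scal; ring.
Qed.

Lemma Tay_deriv m u t :
  is_derive (fun t => pr (Tay (S m) (Cmult (RtoC t) u))) t (pr (Cmult u (Tay m (Cmult (RtoC t) u)))).
Proof.
  revert t; induction m; intro t.
  - apply is_derive_ext with (fun _ => pr (RtoC 1)).
    + intro s. f_equal. unfold Tay; simpl. apply injective_projections; simpl; rewrite ?Rinv_1; ring.
    + replace (pr (Cmult u (Tay 0 (Cmult (RtoC t) u)))) with 0.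
      * auto_derive; auto.
      * unfold Tay; simpl. replace (Cmult u (RtoC 0)) with (Cmult (RtoC 0) (RtoC 0))
          by (apply injective_projections; simpl; ring). rewrite pr_scal; ring.
  - set (K := pr (Cmult (Cpow u (S m)) (RtoC (/ INR (fact (S m)))))).
    apply is_derive_ext with (fun t => pr (Tay (S m) (Cmult (RtoC t) u)) + t ^ (S m) * K).
    + intro s. rewrite (Tay_S (S m)), pr_add, pow_scal. f_equal. unfold K.
      rewrite <- pr_scal. f_equal. ring.
    + assert (Hd : is_derive (fun t => t ^ (S m) * K) t (INR (S m) * t ^ m * K)).
      { auto_derive; auto. simpl. ring. }
      replace (pr (Cmult u (Tay (S m) (Cmult (RtoC t) u))))
        with (pr (Cmult u (Tay m (Cmult (RtoC t) u))) + INR (S m) * t ^ m * K).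
      * apply (is_derive_plus _ _ _ _ _ (IHm t) Hd).
      * rewrite Tay_S, pow_scal.
        replace (Cmult u (Cplus (Tay m (Cmult (RtoC t) u))
                   (Cmult (Cmult (RtoC (t ^ m)) (Cpow u m)) (RtoC (/ INR (fact m))))))
          with (Cplus (Cmult u (Tay m (Cmult (RtoC t) u)))
                 (Cmult (RtoC (t ^ m * (INR (S m) * / INR (fact (S m))))) (Cpow u (S m)))).
        -- rewrite pr_add, pr_scal. unfold K.
           replace (Cmult (Cpow u (S m)) (RtoC (/ INR (fact (S m))))) with
             (Cmult (RtoC (/ INR (fact (S m)))) (Cpow u (S m))) by ring.
           rewrite pr_scal. ring.
        -- rewrite fact_S_inv. rewrite RtoC_mult. simpl Cpow. ring.
Qed.
End Proj.


Lemma exp_le_exp x y : x <= y -> exp x <= exp y.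
Proof. intro H; destruct H as [H|H]; [left; apply exp_increasing; auto| subst; lra]. Qed.

Lemma Cmod_le_sum c : Cmod c <= Rabs (fst c) + Rabs (snd c).
Proof.
  unfold Cmod. rewrite <- (sqrt_pow2 (Rabs (fst c) + Rabs (snd c))) by
    (pose proof (Rabs_pos (fst c)); pose proof (Rabs_pos (snd c)); lra).
  apply sqrt_le_1_alt.
  pose proof (Rabs_pos (fst c)); pose proof (Rabs_pos (snd c)).
  rewrite <- (pow2_abs (fst c)), <- (pow2_abs (snd c)). nra.
Qed.

Lemma fst_le_Cmod c : Rabs (fst c) <= Cmod c.
Proof. pose proof (Rmax_Cmod c). pose proof (Rmax_l (Rabs (fst c)) (Rabs (snd c))). lra. Qed.
Lemma snd_le_Cmod c : Rabs (snd c) <= Cmod c.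
Proof. pose proof (Rmax_Cmod c). pose proof (Rmax_r (Rabs (fst c)) (Rabs (snd c))). lra. Qed.

Lemma Cexp_deriv_fst u t : is_derive (fun t => fst (Cexp (Cmult (RtoC t) u))) t
   (fst (Cmult u (Cexp (Cmult (RtoC t) u)))).
Proof.
  apply is_derive_ext with (fun t => exp (t * fst u) * cos (t * snd u)).
  - intro s. rewrite Cexp_scal. reflexivity.
  - rewrite Cexp_scal. destruct u as [x y]. simpl. auto_derive; auto. ring.
Qed.
Lemma Cexp_deriv_snd u t : is_derive (fun t => snd (Cexp (Cmult (RtoC t) u))) t
   (snd (Cmult u (Cexp (Cmult (RtoC t) u)))).
Proof.
  apply is_derive_ext with (fun t => exp (t * fst u) * sin (t * snd u)).
  - intro s. rewrite Cexp_scal. reflexivity.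
  - rewrite Cexp_scal. destruct u as [x y]. simpl. auto_derive; auto. ring.
Qed.

Section Proj2.
Variable pr : C -> R.
Hypothesis pr_add : forall a b, pr (Cplus a b) = pr a + pr b.
Hypothesis pr_scal : forall r c, pr (Cmult (RtoC r) c) = r * pr c.
Hypothesis pr_le : forall c, Rabs (pr c) <= Cmod c.
Hypothesis pr_de : forall u t, is_derive (fun t => pr (Cexp (Cmult (RtoC t) u))) t
   (pr (Cmult u (Cexp (Cmult (RtoC t) u)))).

Lemma pr_minus a b : pr (Cminus a b) = pr a - pr b.
Proof.
  unfold Cminus. rewrite pr_add.
  replace (Copp b) with (Cmult (RtoC (-1)) b) by (apply injective_projections; simpl; ring).
  rewrite pr_scal. ring.
Qed.

Lemma comp_bound m u
  (IH : forall v, Cmod (Cminus (Cexp v) (Tay m v)) <= 2 ^ m * Cmod v ^ m * exp (Cmod v)) :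
  Rabs (pr (Cminus (Cexp u) (Tay (S m) u))) <= Cmod u * (2 ^ m * Cmod u ^ m * exp (Cmod u)).
Proof.
  set (h := fun t => pr (Cexp (Cmult (RtoC t) u)) - pr (Tay (S m) (Cmult (RtoC t) u))).
  set (dh := fun t => pr (Cmult u (Cexp (Cmult (RtoC t) u))) - pr (Cmult u (Tay m (Cmult (RtoC t) u)))).
  assert (Hb := bounded_variation h dh (Cmod u * (2 ^ m * Cmod u ^ m * exp (Cmod u))) 0 1).
  assert (E1 : h 1 = pr (Cminus (Cexp u) (Tay (S m) u))).
  { unfold h. rewrite Cmult_1_l, pr_minus. reflexivity. }
  assert (E0 : h 0 = 0).
  { unfold h. rewrite Cmult_0_l, Cexp_0, Tay_0. ring. }
  rewrite <- E1. replace (h 1) with (h 1 - h 0) by (rewrite E0; ring).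
  replace (Cmod u * (2 ^ m * Cmod u ^ m * exp (Cmod u))) with
    (Cmod u * (2 ^ m * Cmod u ^ m * exp (Cmod u)) * Rabs (1 - 0)) by
    (rewrite Rminus_0_r, Rabs_R1; ring).
  apply Hb. intros t Ht. rewrite Rminus_0_r, Rminus_0_r, Rabs_R1 in Ht. split.
  - apply (is_derive_minus (fun t => pr (Cexp (Cmult (RtoC t) u)))
                           (fun t => pr (Tay (S m) (Cmult (RtoC t) u)))).
    + apply pr_de.
    + apply (Tay_deriv pr pr_add pr_scal).
  - unfold dh. rewrite <- pr_minus.
    replace (Cminus (Cmult u (Cexp (Cmult (RtoC t) u))) (Cmult u (Tay m (Cmult (RtoC t) u))))
      with (Cmult u (Cminus (Cexp (Cmult (RtoC t) u)) (Tay m (Cmult (RtoC t) u)))) by ring.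
    eapply Rle_trans; [apply pr_le|]. rewrite Cmod_mult.
    apply Rmult_le_compat_l; [apply Cmod_ge_0|].
    eapply Rle_trans; [apply IH|].
    assert (Hm : Cmod (Cmult (RtoC t) u) <= Cmod u).
    { rewrite Cmod_mult, Cmod_R. pose proof (Cmod_ge_0 u). pose proof (Rabs_pos t). nra. }
    pose proof (Cmod_ge_0 (Cmult (RtoC t) u)).
    apply Rmult_le_compat.
    + apply Rmult_le_pos; [apply pow_le; lra| apply pow_le; auto].
    + left; apply exp_pos.
    + apply Rmult_le_compat_l; [apply pow_le; lra|]. apply pow_incr; lra.
    + apply exp_le_exp; auto.
Qed.
End Proj2.

Lemma Tay_rem m u : Cmod (Cminus (Cexp u) (Tay m u)) <= 2 ^ m * Cmod u ^ m * exp (Cmod u).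
Proof.
  revert u; induction m; intro u.
  - unfold Tay; simpl. rewrite Rmult_1_l, Rmult_1_l.
    replace (Cminus (Cexp u) (RtoC 0)) with (Cexp u) by (apply injective_projections; simpl; ring).
    rewrite Cmod_Cexp. apply exp_le_exp.
    pose proof (fst_le_Cmod u). pose proof (Rle_abs (fst u)). lra.
  - assert (H1 := comp_bound fst (fun a b => eq_refl) fst_scal fst_le_Cmod Cexp_deriv_fst m u IHm).
    assert (H2 := comp_bound snd (fun a b => eq_refl) snd_scal snd_le_Cmod Cexp_deriv_snd m u IHm).
    eapply Rle_trans; [apply Cmod_le_sum|].
    replace (2 ^ S m * Cmod u ^ S m * exp (Cmod u)) with (2 * (Cmod u * (2^m * Cmod u^m * exp (Cmod u)))) by (simpl; ring). lra.
Qed.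

Module QPart.
Import ListNotations.
Local Open Scope Q_scope.
Fixpoint paddQ (p q : list Q) : list Q :=
  match p, q with
  | nil, _ => q
  | _, nil => p
  | a :: p', b :: q' => (a + b) :: paddQ p' q'
  end.
Definition pscaleQ (c : Q) (p : list Q) : list Q := map (fun a => c * a) p.
Fixpoint pderiv_auxQ (k : nat) (p : list Q) : list Q :=
  match p with nil => nil | a :: t => (inject_Z (Z.of_nat k) * a) :: pderiv_auxQ (S k) t end.
Definition pderivQ (p : list Q) : list Q := match p with nil => nil | _ :: t => pderiv_auxQ 1 t end.
Fixpoint gammaNumQ (l : nat) : list Q :=
  match l with
  | O => 0 :: 1 :: nil
  | S l' => let g := gammaNumQ l' in
      0 :: paddQ (paddQ (pderivQ g) (pscaleQ (-1) (0 :: pderivQ g))) (pscaleQ (inject_Z (Z.of_nat (S l'))) g)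
  end.
Fixpoint pmulQ (p q : list Q) : list Q :=
  match p with nil => nil | a :: t => paddQ (pscaleQ a q) (0 :: pmulQ t q) end.
Fixpoint ppowQ (p : list Q) (n : nat) : list Q :=
  match n with O => 1 :: nil | S n' => pmulQ p (ppowQ p n') end.
Fixpoint factZ (n : nat) : Z := match n with O => 1%Z | S k => (Z.of_nat (S k) * factZ k)%Z end.
Fixpoint qpow (q : Q) (n : nat) : Q := match n with O => 1 | S k => q * qpow q k end.
Definition rowQ (s m : nat) : list Q :=
  map (fun j => qpow (- inject_Z (Z.of_nat s)) j / inject_Z (factZ j)) (seq 0 m).
Fixpoint tcQ (p : list Q) (s m : nat) : list Q :=
  match p with nil => nil | a :: t => paddQ (pscaleQ a (rowQ s m)) (tcQ t (S s) m) end.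
Definition BQ (l : nat) : list Q := pscaleQ (inject_Z (factZ l)) (ppowQ (1 :: -1 :: nil) (S l)).
Definition mm (l : nat) : nat := (2 * S l + 1)%nat.
Definition m0 (l : nat) : nat := if (Nat.eqb l 0 || Nat.odd l)%bool then (2 * S l)%nat else (2 * S l + 1)%nat.
Definition DQ (l : nat) : list Q :=
  paddQ (repeat 0 (S l) ++ tcQ (gammaNumQ l) 0 (mm l)) (pscaleQ (-1) (tcQ (BQ l) 0 (mm l))).
Definition checkl (l : nat) : Prop := firstn (m0 l) (map Qred (DQ l)) = repeat 0 (m0 l).

Lemma check_all l : (l <= 12)%nat -> checkl l.
Proof.
  intro H.
  do 13 (destruct l as [|l]; [vm_compute; reflexivity|]).
  exfalso; apply Nat.leb_le in H; discriminate H.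
Qed.

End QPart.
Import QPart.


Lemma Q2R_inject z : Q2R (inject_Z z) = IZR z.
Proof. unfold Q2R; simpl. field. Qed.
Lemma Q2R_0 : Q2R 0%Q = 0.
Proof. unfold Q2R; simpl. ring. Qed.
Lemma Q2R_1 : Q2R 1%Q = 1.
Proof. unfold Q2R; simpl. field. Qed.
Lemma Q2R_m1 : Q2R (-1)%Q = -1.
Proof. unfold Q2R; simpl. field. Qed.
Lemma Q2R_nat k : Q2R (inject_Z (Z.of_nat k)) = INR k.
Proof. rewrite Q2R_inject, INR_IZR_INZ. reflexivity. Qed.

Lemma factZ_ok n : IZR (factZ n) = INR (fact n).
Proof.
  induction n; [simpl; reflexivity|]. change (factZ (S n)) with (Z.of_nat (S n) * factZ n)%Z.
  rewrite mult_IZR, IHn, <- INR_IZR_INZ. change (fact (S n)) with (S n * fact n)%nat.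
  rewrite mult_INR. reflexivity.
Qed.

Lemma map_padd p q : map Q2R (paddQ p q) = padd (map Q2R p) (map Q2R q).
Proof.
  revert q; induction p; intros q; destruct q; simpl; auto.
  rewrite Q2R_plus, IHp. reflexivity.
Qed.
Lemma map_pscale c p : map Q2R (pscaleQ c p) = pscale (Q2R c) (map Q2R p).
Proof.
  induction p; simpl; auto. rewrite Q2R_mult, IHp. reflexivity.
Qed.
Lemma map_pderiv_aux k p : map Q2R (pderiv_auxQ k p) = pderiv_aux k (map Q2R p).
Proof.
  revert k; induction p; intro k; simpl; auto. rewrite Q2R_mult, Q2R_nat, IHp. reflexivity.
Qed.
Lemma map_pderiv p : map Q2R (pderivQ p) = pderiv (map Q2R p).
Proof. destruct p; simpl; auto. apply map_pderiv_aux. Qed.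

Lemma gammaNum_Q l : gammaNum l = map Q2R (gammaNumQ l).
Proof.
  induction l.
  - simpl. rewrite Q2R_0, Q2R_1. reflexivity.
  - change (gammaNum (S l)) with (pmulX (padd (padd (pderiv (gammaNum l))
      (pscale (-1) (pmulX (pderiv (gammaNum l))))) (pscale (INR (S l)) (gammaNum l)))).
    change (gammaNumQ (S l)) with (0%Q :: paddQ (paddQ (pderivQ (gammaNumQ l))
      (pscaleQ (-1) (0%Q :: pderivQ (gammaNumQ l)))) (pscaleQ (inject_Z (Z.of_nat (S l))) (gammaNumQ l))).
    rewrite IHl. cbn [map]. rewrite Q2R_0, !map_padd, !map_pscale, Q2R_m1, Q2R_nat.
    cbn [map]. rewrite Q2R_0, map_pderiv. reflexivity.
Qed.

Lemma peval_padd p q x : peval (padd p q) x = Cplus (peval p x) (peval q x).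
Proof.
  revert q; induction p; intros q; destruct q; simpl; try ring.
  rewrite IHp, RtoC_plus. ring.
Qed.
Lemma peval_pscale c p x : peval (pscale c p) x = Cmult (RtoC c) (peval p x).
Proof.
  induction p; simpl; [ring|]. rewrite IHp, RtoC_mult. ring.
Qed.
Lemma peval_Q_add p q x : peval (map Q2R (paddQ p q)) x = Cplus (peval (map Q2R p) x) (peval (map Q2R q) x).
Proof. rewrite map_padd; apply peval_padd. Qed.
Lemma peval_Q_scale c p x : peval (map Q2R (pscaleQ c p)) x = Cmult (RtoC (Q2R c)) (peval (map Q2R p) x).
Proof. rewrite map_pscale; apply peval_pscale. Qed.
Lemma peval_Q_cons0 p x : peval (map Q2R (0%Q :: p)) x = Cmult x (peval (map Q2R p) x).
Proof. simpl. rewrite Q2R_0. ring. Qed.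
Lemma peval_Q_mul p q x : peval (map Q2R (pmulQ p q)) x = Cmult (peval (map Q2R p) x) (peval (map Q2R q) x).
Proof.
  induction p; simpl pmulQ; [simpl; ring|].
  rewrite peval_Q_add, peval_Q_scale, peval_Q_cons0, IHp. simpl. ring.
Qed.
Lemma peval_Q_pow p n x : peval (map Q2R (ppowQ p n)) x = Cpow (peval (map Q2R p) x) n.
Proof.
  induction n; simpl ppowQ.
  - simpl. rewrite Q2R_1. ring.
  - rewrite peval_Q_mul, IHn. reflexivity.
Qed.
Lemma peval_BQ l x : peval (map Q2R (BQ l)) x = Cmult (RtoC (INR (fact l))) (Cpow (Cminus (RtoC 1) x) (S l)).
Proof.
  unfold BQ. rewrite peval_Q_scale, peval_Q_pow, Q2R_inject, factZ_ok. f_equal. f_equal.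
  simpl. rewrite Q2R_1, Q2R_m1. ring.
Qed.
Lemma peval_zeros n p x : peval (map Q2R (repeat 0%Q n ++ p)) x = Cmult (Cpow x n) (peval (map Q2R p) x).
Proof.
  induction n; simpl; [ring|]. rewrite IHn, Q2R_0. ring.
Qed.


Lemma csum_scal x m f : Cmult x (csum m f) = csum m (fun j => Cmult x (f j)).
Proof.
  revert f; induction m; intro f; simpl; [ring|]. rewrite <- IHm. ring.
Qed.

Lemma peval_seq (g : nat -> R) a m x :
  peval (map g (seq a m)) x = csum m (fun j => Cmult (RtoC (g (a + j)%nat)) (Cpow x j)).
Proof.
  revert a; induction m; intro a; simpl; auto.
  rewrite IHm, csum_scal, Nat.add_0_r. f_equal; [simpl; ring|].
  apply csum_ext. intros j _. replace (a + S j)%nat with (S a + j)%nat by lia. simpl. ring.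
Qed.

Lemma Q2R_qpow q n : Q2R (qpow q n) = Q2R q ^ n.
Proof. induction n; simpl; [apply Q2R_1|]. rewrite Q2R_mult, IHn. reflexivity. Qed.

Lemma factZ_nz j : ~ (inject_Z (factZ j) == 0)%Q.
Proof.
  intro H. assert (factZ j <> 0%Z).
  { intro E. pose proof (factZ_ok j) as F. rewrite E in F. simpl in F.
    apply (INR_fact_neq_0 j). auto. }
  unfold Qeq in H. simpl in H. lia.
Qed.

Lemma row_eval s m w : peval (map Q2R (rowQ s m)) w = Tay m (Cmult (RtoC (- INR s)) w).
Proof.
  unfold rowQ, Tay. rewrite map_map, peval_seq. apply csum_ext. intros j _. simpl.
  unfold Qdiv. rewrite Q2R_mult, Q2R_inv by apply factZ_nz.
  rewrite Q2R_qpow, Q2R_opp, Q2R_nat, Q2R_inject, factZ_ok.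
  rewrite Cpow_mult_l, <- RtoC_pow, !RtoC_mult. ring.
Qed.

Definition sumabs (p : list R) : R := fold_right (fun a acc => Rabs a + acc) 0 p.

Lemma sumabs_pos p : 0 <= sumabs p.
Proof. induction p; simpl; [lra|]. pose proof (Rabs_pos a). lra. Qed.

Lemma peval_bound p x Rb : Cmod x <= Rb -> 1 <= Rb -> Cmod (peval p x) <= sumabs p * Rb ^ length p.
Proof.
  intros Hx HR. induction p; simpl.
  - rewrite Cmod_0. lra.
  - eapply Rle_trans; [apply Cmod_triangle|]. rewrite Cmod_R, Cmod_mult.
    pose proof (Cmod_ge_0 (peval p x)). pose proof (Cmod_ge_0 x).
    pose proof (pow_R1_Rle Rb (length p) HR). pose proof (sumabs_pos p). pose proof (Rabs_pos a).
    assert (Cmod x * Cmod (peval p x) <= Rb * (sumabs p * Rb ^ length p)).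
    { apply Rmult_le_compat; auto. }
    assert (1 <= Rb * Rb ^ length p) by nra.
    assert (Rabs a <= Rabs a * (Rb * Rb ^ length p)) by nra.
    nra.
Qed.

Lemma peval_bound1 p x : Cmod x <= 1 -> Cmod (peval p x) <= sumabs p.
Proof. intro H. pose proof (peval_bound p x 1 H (Rle_refl 1)). rewrite pow1 in H0. lra. Qed.

Definition Ex (s : nat) (w : C) : C := Cexp (Cmult (RtoC (- INR s)) w).

Lemma Ex_S s w : Cmult (Ex s w) (Ex 1 w) = Ex (S s) w.
Proof.
  unfold Ex. rewrite <- Cexp_add. f_equal. rewrite (S_INR s). change (INR 1) with 1.
  apply injective_projections; unfold Cmult, Cplus, RtoC; cbn [fst snd]; ring.
Qed.

Lemma tc_err p s m w : Cmod w <= 1 ->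
  Cmod (Cminus (Cmult (Ex s w) (peval (map Q2R p) (Ex 1 w))) (peval (map Q2R (tcQ p s m)) w))
  <= sumabs (map Q2R p) * (2 ^ m * INR (s + length p) ^ m * exp (INR (s + length p))) * Cmod w ^ m.
Proof.
  intro Hw. revert s; induction p; intro s.
  - simpl. replace (Cminus (Cmult (Ex s w) (RtoC 0)) (RtoC 0)) with (RtoC 0) by ring.
    rewrite Cmod_0. lra.
  - simpl tcQ. rewrite peval_Q_add, peval_Q_scale, row_eval.
    cbn [map peval length]. simpl sumabs.
    replace (s + S (length p))%nat with (S s + length p)%nat by lia.
    set (M := INR (S s + length p)).
    replace (Cminus (Cmult (Ex s w) (Cplus (RtoC (Q2R a)) (Cmult (Ex 1 w) (peval (map Q2R p) (Ex 1 w)))))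
       (Cplus (Cmult (RtoC (Q2R a)) (Tay m (Cmult (RtoC (- INR s)) w))) (peval (map Q2R (tcQ p (S s) m)) w)))
     with (Cplus (Cmult (RtoC (Q2R a)) (Cminus (Ex s w) (Tay m (Cmult (RtoC (- INR s)) w))))
        (Cminus (Cmult (Ex (S s) w) (peval (map Q2R p) (Ex 1 w))) (peval (map Q2R (tcQ p (S s) m)) w)))
     by (rewrite <- Ex_S; ring).
    eapply Rle_trans; [apply Cmod_triangle|]. rewrite Cmod_mult, Cmod_R.
    specialize (IHp (S s)). fold M in IHp.
    assert (HT := Tay_rem m (Cmult (RtoC (- INR s)) w)).
    rewrite Cmod_mult, Cmod_R, Rabs_Ropp in HT.
    rewrite (Rabs_right (INR s)) in HT; [|apply Rle_ge, pos_INR].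
    assert (HsM : INR s <= M) by (unfold M; apply le_INR; lia).
    pose proof (pos_INR s). pose proof (Cmod_ge_0 w).
    assert (HT2 : Cmod (Cminus (Ex s w) (Tay m (Cmult (RtoC (- INR s)) w))) <=
                  2 ^ m * M ^ m * exp M * Cmod w ^ m).
    { eapply Rle_trans; [apply HT|]. rewrite Rpow_mult_distr.
      assert (INR s ^ m <= M ^ m) by (apply pow_incr; lra).
      assert (exp (INR s * Cmod w) <= exp M) by (apply exp_le_exp; nra).
      pose proof (pow_le (Cmod w) m H0). pose proof (pow_le (INR s) m H).
      pose proof (pow_le 2 m ltac:(lra)). pose proof (exp_pos (INR s * Cmod w)).
      assert (INR s ^ m * Cmod w ^ m <= M ^ m * Cmod w ^ m) by (apply Rmult_le_compat_r; auto).
      assert (INR s ^ m * Cmod w ^ m * exp (INR s * Cmod w) <= M ^ m * Cmod w ^ m * exp M).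
      { apply Rmult_le_compat; auto; try lra. apply Rmult_le_pos; auto. }
      nra. }
    pose proof (Rabs_pos (Q2R a)).
    assert (Rabs (Q2R a) * Cmod (Cminus (Ex s w) (Tay m (Cmult (RtoC (- INR s)) w))) <=
            Rabs (Q2R a) * (2 ^ m * M ^ m * exp M * Cmod w ^ m)) by (apply Rmult_le_compat_l; auto).
    nra.
Qed.


Lemma pow_mono_le1 x a b : 0 <= x <= 1 -> (a <= b)%nat -> x ^ b <= x ^ a.
Proof.
  intros Hx Hab. replace b with (a + (b - a))%nat by lia. rewrite pow_add.
  assert (x ^ (b - a) <= 1) by (rewrite <- (pow1 (b - a)); apply pow_incr; lra).
  pose proof (pow_le x a (proj1 Hx)). pose proof (pow_le x (b - a) (proj1 Hx)). nra.
Qed.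

Lemma Ex_0 w : Ex 0 w = RtoC 1.
Proof.
  unfold Ex. replace (Cmult (RtoC (- INR 0)) w) with (RtoC 0).
  - apply Cexp_0.
  - apply injective_projections; simpl; ring.
Qed.

Lemma map_Qred p : map Q2R (map Qred p) = map Q2R p.
Proof. induction p; simpl; auto. rewrite IHp, (Qeq_eqR _ _ (Qred_correct a)). reflexivity. Qed.

Definition Npoly (l : nat) (w : C) : C :=
  Cminus (Cmult (Cpow w (S l)) (peval (map Q2R (gammaNumQ l)) (Ex 1 w)))
         (peval (map Q2R (BQ l)) (Ex 1 w)).

Lemma Npoly_bound l : (l <= 12)%nat -> exists KN, 0 <= KN /\
  forall w, Cmod w <= 1 -> Cmod (Npoly l w) <= KN * Cmod w ^ (m0 l).
Proof.
  intro Hl. pose proof (check_all l Hl) as Hc. unfold checkl in Hc.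
  set (D := map Qred (DQ l)) in Hc.
  set (cA := sumabs (map Q2R (gammaNumQ l)) * (2 ^ mm l * INR (0 + length (gammaNumQ l)) ^ mm l
              * exp (INR (0 + length (gammaNumQ l))))).
  set (cB := sumabs (map Q2R (BQ l)) * (2 ^ mm l * INR (0 + length (BQ l)) ^ mm l
              * exp (INR (0 + length (BQ l))))).
  set (cD := sumabs (map Q2R (skipn (m0 l) D))).
  exists (cD + cA + cB).
  assert (0 <= cA).
  { unfold cA. apply Rmult_le_pos; [apply sumabs_pos|]. apply Rmult_le_pos; [|left; apply exp_pos].
    apply Rmult_le_pos; apply pow_le; [lra| apply pos_INR]. }
  assert (0 <= cB).
  { unfold cB. apply Rmult_le_pos; [apply sumabs_pos|]. apply Rmult_le_pos; [|left; apply exp_pos].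
    apply Rmult_le_pos; apply pow_le; [lra| apply pos_INR]. }
  assert (0 <= cD) by apply sumabs_pos.
  split; [lra|]. intros w Hw.
  pose proof (Cmod_ge_0 w) as Hw0.
  assert (HmA := tc_err (gammaNumQ l) 0 (mm l) w Hw). fold cA in HmA.
  assert (HmB := tc_err (BQ l) 0 (mm l) w Hw). fold cB in HmB.
  rewrite Ex_0 in HmA, HmB.
  assert (HD : peval (map Q2R (DQ l)) w =
     Cminus (Cmult (Cpow w (S l)) (peval (map Q2R (tcQ (gammaNumQ l) 0 (mm l))) w))
            (peval (map Q2R (tcQ (BQ l) 0 (mm l))) w)).
  { unfold DQ. rewrite peval_Q_add, peval_zeros, peval_Q_scale, Q2R_m1. ring. }
  assert (HD2 : Cmod (peval (map Q2R (DQ l)) w) <= cD * Cmod w ^ m0 l).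
  { rewrite <- map_Qred. fold D. rewrite <- (firstn_skipn (m0 l) D), Hc, peval_zeros.
    rewrite Cmod_mult, Cmod_pow. rewrite Rmult_comm. apply Rmult_le_compat_r; [apply pow_le; auto|].
    apply peval_bound1; auto. }
  assert (Hmm : (m0 l <= mm l)%nat) by (unfold m0, mm; destruct (_ || _)%bool; lia).
  assert (Hpw : Cmod w ^ mm l <= Cmod w ^ m0 l) by (apply pow_mono_le1; auto).
  assert (Hpw1 : Cmod w ^ S l <= 1) by (rewrite <- (pow1 (S l)); apply pow_incr; lra).
  replace (Npoly l w) with
    (Cplus (peval (map Q2R (DQ l)) w)
      (Cminus (Cmult (Cpow w (S l)) (Cminus (Cmult (RtoC 1) (peval (map Q2R (gammaNumQ l)) (Ex 1 w)))
                                           (peval (map Q2R (tcQ (gammaNumQ l) 0 (mm l))) w)))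
              (Cminus (Cmult (RtoC 1) (peval (map Q2R (BQ l)) (Ex 1 w)))
                      (peval (map Q2R (tcQ (BQ l) 0 (mm l))) w))))
    by (rewrite HD; unfold Npoly; ring).
  eapply Rle_trans; [apply Cmod_triangle|].
  unfold Cminus at 1. eapply Rle_trans; [apply Rplus_le_compat_l, Cmod_triangle|].
  rewrite Cmod_opp, Cmod_mult, Cmod_pow.
  pose proof (Cmod_ge_0 (Cminus (Cmult (RtoC 1) (peval (map Q2R (gammaNumQ l)) (Ex 1 w)))
                                           (peval (map Q2R (tcQ (gammaNumQ l) 0 (mm l))) w))).
  pose proof (pow_le _ (S l) Hw0).
  assert (Cmod w ^ S l * Cmod (Cminus (Cmult (RtoC 1) (peval (map Q2R (gammaNumQ l)) (Ex 1 w)))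
                                           (peval (map Q2R (tcQ (gammaNumQ l) 0 (mm l))) w))
          <= 1 * (cA * Cmod w ^ mm l)) by (apply Rmult_le_compat; auto).
  pose proof (pow_le _ (m0 l) Hw0).
  assert (cA * Cmod w ^ mm l <= cA * Cmod w ^ m0 l) by (apply Rmult_le_compat_l; auto).
  assert (cB * Cmod w ^ mm l <= cB * Cmod w ^ m0 l) by (apply Rmult_le_compat_l; auto).
  nra.
Qed.


Lemma Tay_2 u : Tay 2 u = Cplus (RtoC 1) u.
Proof. unfold Tay; simpl. rewrite Rinv_1. apply injective_projections; simpl; ring. Qed.

Lemma one_minus_xi w : Cmod w <= 1/32 -> Cmod w / 2 <= Cmod (Cminus (RtoC 1) (Ex 1 w)).
Proof.
  intro Hw. set (u := Cmult (RtoC (- INR 1)) w).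
  assert (Hu : Cmod u = Cmod w).
  { unfold u. rewrite Cmod_mult, Cmod_R. simpl INR. rewrite Rabs_Ropp, Rabs_R1. ring. }
  assert (HT := Tay_rem 2 u). rewrite Hu in HT. fold u in HT.
  change (Cexp u) with (Ex 1 w) in HT. rewrite Tay_2 in HT.
  pose proof (Cmod_ge_0 w).
  assert (exp (Cmod w) <= 3) by (apply Rle_trans with (exp 1); [apply exp_le_exp; lra| apply exp_le_3]).
  assert (Cmod (Cminus (Ex 1 w) (Cplus (RtoC 1) u)) <= 12 * Cmod w ^ 2).
  { eapply Rle_trans; [apply HT|]. replace (2 ^ 2) with 4 by ring.
    assert (0 <= Cmod w ^ 2) by (apply pow_le; lra). nra. }
  assert (Cmod w <= Cmod (Cminus (RtoC 1) (Ex 1 w)) + Cmod (Cminus (Ex 1 w) (Cplus (RtoC 1) u))).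
  { replace w with (Cplus (Cminus (RtoC 1) (Ex 1 w)) (Cminus (Ex 1 w) (Cplus (RtoC 1) u))) at 1.
    - apply Cmod_triangle.
    - unfold u. simpl INR. apply injective_projections; simpl; ring. }
  simpl in H1. nra.
Qed.

Definition Ff (l : nat) (w : C) : C :=
  Cminus (Cdiv (gamma l (Ex 1 w)) (RtoC (INR (fact l)))) (Cinv (Cpow w (S l))).

Lemma RtoC_neq r : r <> 0 -> RtoC r <> RtoC 0.
Proof. intros H E. apply H. injection E. auto. Qed.

Lemma Ff_eq l w : w <> RtoC 0 -> Cminus (RtoC 1) (Ex 1 w) <> RtoC 0 ->
  Ff l w = Cmult (Npoly l w) (Cinv (Cmult (Cmult (RtoC (INR (fact l))) (Cpow (Cminus (RtoC 1) (Ex 1 w)) (S l))) (Cpow w (S l)))).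
Proof.
  intros Hw H1. unfold Ff, Npoly, gamma. rewrite gammaNum_Q, peval_BQ.
  pose proof (Cpow_nz _ (S l) Hw). pose proof (Cpow_nz _ (S l) H1).
  pose proof (RtoC_neq _ (INR_fact_neq_0 l)).
  field. auto.
Qed.

Lemma regionB l : (l <= 12)%nat -> exists K, 0 <= K /\
  forall w, w <> RtoC 0 -> Cmod w <= 1/32 -> Cmod (Ff l w) <= K * Cmod w ^ (m0 l - 2 * S l).
Proof.
  intro Hl. destruct (Npoly_bound l Hl) as [KN [HKN HN]].
  exists (KN * 2 ^ S l / INR (fact l)). split.
  { apply Rmult_le_pos; [apply Rmult_le_pos; auto; apply pow_le; lra|].
    left; apply Rinv_0_lt_compat, lt_0_INR, lt_O_fact. }
  intros w Hw0 Hw.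
  assert (Hwp : 0 < Cmod w) by (apply Cmod_gt_0; auto).
  assert (H1 := one_minus_xi w Hw).
  assert (H1nz : Cminus (RtoC 1) (Ex 1 w) <> RtoC 0).
  { intro E. rewrite E, Cmod_0 in H1. lra. }
  rewrite Ff_eq by auto.
  assert (Hden : Cmult (Cmult (RtoC (INR (fact l))) (Cpow (Cminus (RtoC 1) (Ex 1 w)) (S l))) (Cpow w (S l)) <> RtoC 0).
  { apply Cmult_neq_0; [apply Cmult_neq_0|]; [apply RtoC_neq, INR_fact_neq_0| apply Cpow_nz; auto| apply Cpow_nz; auto]. }
  rewrite Cmod_mult, (Cmod_inv _ Hden), !Cmod_mult, Cmod_R, !Cmod_pow.
  rewrite Rabs_right by (apply Rle_ge, pos_INR).
  set (e := (m0 l - 2 * S l)%nat).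
  assert (Hm : m0 l = (S l + S l + e)%nat) by (unfold e, m0; destruct (_ || _)%bool; lia).
  specialize (HN w ltac:(lra)). rewrite Hm, !pow_add in HN.
  set (a := Cmod w ^ S l) in *. set (q := Cmod (Cminus (RtoC 1) (Ex 1 w)) ^ S l).
  set (f := INR (fact l)). set (b := Cmod w ^ e) in *.
  assert (Ha : 0 < a) by (apply pow_lt; auto).
  assert (Hf : 0 < f) by (apply lt_0_INR, lt_O_fact).
  assert (Hb : 0 <= b) by (apply pow_le; lra).
  assert (Hq : a * / 2 ^ S l <= q).
  { unfold a, q. replace (Cmod w ^ S l * / 2 ^ S l) with ((Cmod w / 2) ^ S l).
    - apply pow_incr. lra.
    - unfold Rdiv. rewrite Rpow_mult_distr, pow_inv. reflexivity. }
  assert (H2 : 0 < 2 ^ S l) by (apply pow_lt; lra).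
  assert (Hq0 : 0 < a * / 2 ^ S l) by (apply Rmult_lt_0_compat; auto; apply Rinv_0_lt_compat; auto).
  apply Rle_trans with (KN * (a * a * b) * / (f * (a * / 2 ^ S l) * a)).
  - apply Rmult_le_compat.
    + apply Cmod_ge_0.
    + left. apply Rinv_0_lt_compat. apply Rmult_lt_0_compat; auto. apply Rmult_lt_0_compat; auto. lra.
    + lra.
    + apply Rinv_le_contravar.
      * apply Rmult_lt_0_compat; auto. apply Rmult_lt_0_compat; auto.
      * apply Rmult_le_compat_r; [lra|]. apply Rmult_le_compat_l; lra.
  - right. field. split; lra.
Qed.


Definition dd : R := 1/64.
Definition eta : R := Rmin (1 - exp (- dd)) (Rmin (exp dd - 1) (sqrt (2 * exp (- dd) * (1 - cos dd)))).

Lemma PI_gt_3 : 3 < PI.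
Proof. pose proof PI2_3_2. lra. Qed.

Lemma eta_pos : 0 < eta.
Proof.
  unfold eta, dd. pose proof PI_gt_3.
  assert (exp (- (1/64)) < 1) by (pose proof (exp_increasing (-(1/64)) 0 ltac:(lra)); rewrite exp_0 in H0; lra).
  assert (1 < exp (1/64)) by (pose proof (exp_increasing 0 (1/64) ltac:(lra)); rewrite exp_0 in H1; lra).
  assert (cos (1/64) < 1) by (pose proof (cos_decreasing_1 0 (1/64) ltac:(lra) ltac:(lra) ltac:(lra) ltac:(lra) ltac:(lra)); rewrite cos_0 in H2; lra).
  apply Rmin_glb_lt; [lra|]. apply Rmin_glb_lt; [lra|].
  apply sqrt_lt_R0. pose proof (exp_pos (- (1/64))). apply Rmult_lt_0_compat; [lra|lra].
Qed.

Lemma Ex1_comp w : Ex 1 w = (exp (- fst w) * cos (snd w), - (exp (- fst w) * sin (snd w))).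
Proof.
  unfold Ex. change (INR 1) with 1. rewrite Cexp_scal.
  rewrite !Ropp_mult_distr_l_reverse, !Rmult_1_l.
  rewrite cos_neg, sin_neg. f_equal. ring.
Qed.

Lemma one_minus_xi_A w : 1/32 < Cmod w -> Rabs (snd w) <= PI -> eta <= Cmod (Cminus (RtoC 1) (Ex 1 w)).
Proof.
  intros Hw Hy. pose proof PI_gt_3.
  destruct w as [x y]. simpl in Hy.
  assert (HC : Cminus (RtoC 1) (Ex 1 (x, y)) = (1 - exp (- x) * cos y, exp (- x) * sin y)).
  { rewrite Ex1_comp. apply injective_projections; simpl; ring. }
  rewrite HC. set (E := exp (- x)).
  assert (HE : 0 < E) by apply exp_pos.
  pose proof (COS_bound y) as Hc. pose proof (sin2_cos2 y) as Hsc. unfold Rsqr in Hsc.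
  destruct (Rle_or_lt dd x) as [H1|H1].
  -
    assert (E <= exp (- dd)) by (apply exp_le_exp; lra).
    eapply Rle_trans; [|apply fst_le_Cmod]. simpl fst.
    eapply Rle_trans; [apply Rmin_l|]. eapply Rle_trans; [|apply Rle_abs]. nra.
  - destruct (Rle_or_lt x (- dd)) as [H2|H2].
    +
      assert (Hed : exp dd <= E) by (apply exp_le_exp; lra).
      assert (HCe : Cmod (Ex 1 (x, y)) = E).
      { unfold Ex. rewrite Cmod_Cexp. simpl. unfold E. f_equal. ring. }
      assert (Htr : Cmod (Ex 1 (x, y)) <= 1 + Cmod (Cminus (RtoC 1) (Ex 1 (x, y)))).
      { replace (Ex 1 (x, y)) with (Cminus (RtoC 1) (Cminus (RtoC 1) (Ex 1 (x, y)))) at 1 by ring.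
        unfold Cminus at 1. eapply Rle_trans; [apply Cmod_triangle|]. rewrite Cmod_opp, Cmod_1. lra. }
      rewrite HC in Htr. unfold eta.
      eapply Rle_trans; [apply Rmin_r|]. eapply Rle_trans; [apply Rmin_l|]. fold E in Htr. lra.
    +
      assert (Hyd : dd < Rabs y).
      { assert (Hs : 1/1024 < x * x + y * y).
        { destruct (Rle_or_lt (x * x + y * y) (1/1024)) as [Hs|Hs]; auto.
          exfalso. unfold Cmod in Hw. simpl in Hw.
          assert (Hsq : sqrt (x * (x * 1) + y * (y * 1)) <= sqrt ((1/32)^2)).
          { apply sqrt_le_1_alt. simpl. lra. }
          rewrite sqrt_pow2 in Hsq by lra. lra. }
        unfold dd in *. pose proof (Rabs_pos y). pose proof (Rsqr_abs y) as Ha. unfold Rsqr in Ha. rewrite Ha in Hs.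
        assert (x * x < 1/4096) by nra. nra. }
      assert (Hcy : cos y <= cos dd).
      { assert (Hca : cos y = cos (Rabs y)).
        { destruct (Rcase_abs y); [rewrite Rabs_left by auto; rewrite cos_neg; auto| rewrite Rabs_right; auto]. }
        rewrite Hca. left. apply cos_decreasing_1; unfold dd in *; try lra. }
      assert (exp (- dd) <= E) by (apply exp_le_exp; lra).
      assert (0 <= 1 - cos dd) by (pose proof (COS_bound dd); lra).
      unfold eta. eapply Rle_trans; [apply Rmin_r|]. eapply Rle_trans; [apply Rmin_r|].
      unfold Cmod. apply sqrt_le_1_alt. simpl fst; simpl snd.
      assert (2 * exp (- dd) * (1 - cos dd) <= 2 * E * (1 - cos y)).
      { apply Rmult_le_compat; try lra. pose proof (exp_pos (- dd)). lra. }
      assert (Hid : (1 - E * cos y) ^ 2 + (E * sin y) ^ 2 - ((1 - E) ^ 2 + 2 * E * (1 - cos y))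
                    = E * E * (sin y * sin y + cos y * cos y - 1)) by ring.
      rewrite Hsc in Hid. assert (0 <= (1 - E) ^ 2) by (apply pow2_ge_0). lra.
Qed.


Lemma Cmod_Ex1 w : Cmod (Ex 1 w) = exp (- fst w).
Proof. unfold Ex. rewrite Cmod_Cexp. simpl. f_equal. ring. Qed.

Lemma regionA l a : 0 <= a -> exists K, 0 <= K /\
  forall w, 1/32 < Cmod w -> Rabs (snd w) <= PI -> - a <= fst w -> Cmod (Ff l w) <= K.
Proof.
  intro Ha.
  set (sA := sumabs (map Q2R (gammaNumQ l))).
  set (n := length (map Q2R (gammaNumQ l))).
  set (f := INR (fact l)).
  assert (Hf : 0 < f) by (apply lt_0_INR, lt_O_fact).
  pose proof eta_pos as Heta.
  assert (He : 0 < eta ^ S l) by (apply pow_lt; auto).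
  assert (H32 : 0 < (1/32) ^ S l) by (apply pow_lt; lra).
  assert (HRb : 1 <= exp a) by (rewrite <- exp_0; apply exp_le_exp; auto).
  assert (HsA : 0 <= sA) by apply sumabs_pos.
  assert (HRn : 0 <= exp a ^ n) by (apply pow_le; lra).
  exists (sA * exp a ^ n * / (eta ^ S l * f) + / (1/32) ^ S l). split.
  { apply Rplus_le_le_0_compat; [|left; apply Rinv_0_lt_compat; auto].
    apply Rmult_le_pos; [nra|]. left; apply Rinv_0_lt_compat, Rmult_lt_0_compat; auto. }
  intros w Hw Hy Hx.
  assert (H1 := one_minus_xi_A w Hw Hy).
  assert (H1nz : Cminus (RtoC 1) (Ex 1 w) <> RtoC 0).
  { intro E. rewrite E, Cmod_0 in H1. lra. }
  assert (Hw0 : w <> RtoC 0).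
  { intro E. rewrite E, Cmod_0 in Hw. lra. }
  unfold Ff, Cminus at 1. eapply Rle_trans; [apply Cmod_triangle|]. rewrite Cmod_opp.
  apply Rplus_le_compat.
  - unfold gamma. rewrite Cmod_div by (apply RtoC_neq, INR_fact_neq_0).
    rewrite Cmod_div by (apply Cpow_nz; auto).
    rewrite Cmod_R, Rabs_right by (apply Rle_ge, pos_INR). fold f.
    rewrite Cmod_pow.
    assert (Hp : Cmod (peval (gammaNum l) (Ex 1 w)) <= sA * exp a ^ n).
    { rewrite gammaNum_Q. apply peval_bound; auto. rewrite Cmod_Ex1. apply exp_le_exp. lra. }
    assert (Hq : eta ^ S l <= Cmod (Cminus (RtoC 1) (Ex 1 w)) ^ S l) by (apply pow_incr; lra).
    unfold Rdiv. rewrite Rmult_assoc, <- Rinv_mult.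
    apply Rmult_le_compat; auto.
    + apply Cmod_ge_0.
    + left. apply Rinv_0_lt_compat. apply Rmult_lt_0_compat; auto. lra.
    + apply Rinv_le_contravar. apply Rmult_lt_0_compat; auto.
      apply Rmult_le_compat_r; lra.
  - rewrite Cmod_inv by (apply Cpow_nz; auto). rewrite Cmod_pow.
    apply Rinv_le_contravar; auto. apply pow_incr. lra.
Qed.


Lemma core l a : (l <= 12)%nat -> 0 <= a -> exists C, 0 < C /\
  forall w, w <> RtoC 0 -> Rabs (snd w) <= PI -> - a <= fst w ->
  Cmod (Ff l w) <= C * (if (Nat.eqb l 0 || Nat.odd l)%bool then 1 else Cmod w).
Proof.
  intros Hl Ha.
  destruct (regionB l Hl) as [KB [HKB HB]].
  destruct (regionA l a Ha) as [KA [HKA HA]].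
  exists (KB + 32 * KA + 1). split; [lra|].
  intros w Hw0 Hy Hx. pose proof (Cmod_ge_0 w).
  unfold m0 in HB. destruct (Nat.eqb l 0 || Nat.odd l)%bool.
  - replace (2 * S l - 2 * S l)%nat with 0%nat in HB by lia.
    destruct (Rle_or_lt (Cmod w) (1/32)) as [H1|H1].
    + specialize (HB w Hw0 H1). simpl in HB. lra.
    + specialize (HA w H1 Hy Hx). lra.
  - replace (2 * S l + 1 - 2 * S l)%nat with 1%nat in HB by lia.
    destruct (Rle_or_lt (Cmod w) (1/32)) as [H1|H1].
    + specialize (HB w Hw0 H1). rewrite pow_1 in HB.
      assert (KB * Cmod w <= (KB + 32 * KA + 1) * Cmod w) by (apply Rmult_le_compat_r; lra). lra.
    + specialize (HA w H1 Hy Hx).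
      assert (KA <= 32 * KA * Cmod w) by nra. nra.
Qed.

Lemma arc_aux phi theta : PI / 2 < theta < PI -> Rabs phi <= theta -> cos phi < 0 ->
  sin theta <= Rabs (sin phi) /\ cos theta <= cos phi.
Proof.
  intros [H1 H2] H3 H4.
  set (psi := Rabs phi).
  assert (Hc : cos phi = cos psi).
  { unfold psi. destruct (Rcase_abs phi); [rewrite Rabs_left by auto; rewrite cos_neg; auto| rewrite Rabs_right; auto]. }
  assert (Hp0 : 0 <= psi) by apply Rabs_pos.
  assert (Hs : Rabs (sin phi) = sin psi).
  { unfold psi in *. destruct (Rcase_abs phi).
    - rewrite (Rabs_left phi) in * by auto. rewrite sin_neg.
      assert (0 <= sin (- phi)) by (apply sin_ge_0; lra). rewrite sin_neg in H.
      apply Rabs_left1. lra.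
    - rewrite (Rabs_right phi) in * by auto. apply Rabs_right, Rle_ge, sin_ge_0; lra. }
  rewrite Hc in *. rewrite Hs.
  assert (PI / 2 < psi).
  { destruct (Rle_or_lt psi (PI / 2)); auto. pose proof (cos_ge_0 psi ltac:(lra) H). lra. }
  fold psi in H3.
  destruct (Req_dec psi theta) as [E|E]; [rewrite E; lra|].
  split; left.
  - apply sin_decreasing_1; lra.
  - apply cos_decreasing_1; lra.
Qed.

Theorem lemma3p2 :
  forall k : nat, (1 <= k <= 6)%nat ->
  exists theta0 : R, PI / 2 < theta0 /\
  forall theta kappa : R, PI / 2 < theta < theta0 -> theta < PI -> 0 < kappa ->
  forall l : nat, (l <= 2 * k)%nat ->
  exists c : R, 0 < c /\
  forall tau : R, 0 < tau ->
  forall z : C, GammaCtau theta kappa tau z ->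
    Cmod (Cminus (Cmult (Cdiv (gamma l (Cexp (Cmult (RtoC (- tau)) z))) (RtoC (INR (fact l))))
                        (RtoC (tau ^ (S l))))
                 (Cinv (Cpow z (S l))))
    <= (if (Nat.eqb l 0 || Nat.odd l)%bool
        then c * tau ^ (S l)
        else c * tau ^ (S (S l)) * Cmod z).
Proof.
  intros k Hk. exists PI. split; [apply PI2_Rlt_PI|].
  intros theta kappa [Ht1 Ht2] Ht3 Hkap l Hl.
  assert (Hl12 : (l <= 12)%nat) by lia.
  assert (Hsin : 0 < sin theta) by (apply sin_gt_0; pose proof PI2_RGT_0; lra).
  assert (Hcos : cos theta < 0) by (apply cos_lt_0; lra).
  set (a := - (PI * cos theta / sin theta)).
  assert (Ha : 0 <= a).
  { unfold a. unfold Rdiv. pose proof PI_gt_3.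
    assert (0 < / sin theta) by (apply Rinv_0_lt_compat; auto).
    assert (PI * cos theta * / sin theta < 0).
    { assert (PI * cos theta < 0) by nra. nra. }
    lra. }
  destruct (core l a Hl12 Ha) as [C [HC Hcore]].
  exists C. split; auto.
  intros tau Htau z [HG Hz].
  set (w := Cmult (RtoC tau) z).
  assert (Hz0 : z <> RtoC 0).
  { intro E. destruct HG as [[phi [_ Ez]]|[r [Hr [Ez|Ez]]]]; rewrite Ez in E; injection E; intros E2 E1.
    - pose proof (sin2_cos2 phi). unfold Rsqr in H.
      assert (kappa * kappa * (sin phi * sin phi + cos phi * cos phi) = 0) by nra. rewrite H in H0. nra.
    - nra.
    - nra. }
  assert (Hw0 : w <> RtoC 0).
  { unfold w. apply Cmult_neq_0; auto. apply RtoC_neq. lra. }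
  assert (Hwy : Rabs (snd w) <= PI).
  { unfold w. simpl. replace (tau * snd z + 0 * fst z) with (tau * snd z) by ring.
    rewrite Rabs_mult, (Rabs_right tau) by lra.
    apply Rmult_le_compat_l with (r := tau) in Hz; [|lra].
    replace (tau * (PI / tau)) with PI in Hz by (field; lra). lra. }
  assert (Hwx : - a <= fst w).
  { unfold w. simpl. replace (tau * fst z - 0 * snd z) with (tau * fst z) by ring.
    unfold a. rewrite Ropp_involutive.
    assert (Hkey : forall r s, 0 <= r -> cos theta <= s -> sin theta <= Rabs (snd z) ->
               Rabs (snd z) = r * Rabs s * 0 + r * 0 + (r * (sin theta) * 0) + Rabs (snd z) -> True) by auto.
    clear Hkey.
    assert (Hgen : forall r c S, 0 <= r -> cos theta <= c -> sin theta <= S -> tau * (r * S) <= PI ->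
               PI * cos theta / sin theta <= tau * (r * c)).
    { intros r c S Hr Hc HS HP.
      assert (Hrs : tau * r <= PI / sin theta).
      { apply Rmult_le_reg_r with (sin theta); auto. replace (PI / sin theta * sin theta) with PI by (field; lra).
        assert (tau * r * sin theta <= tau * (r * S)) by (rewrite Rmult_assoc; apply Rmult_le_compat_l; [lra|]; apply Rmult_le_compat_l; lra).
        lra. }
      assert (tau * r * cos theta <= tau * r * c) by (apply Rmult_le_compat_l; nra).
      assert (PI / sin theta * cos theta <= tau * r * cos theta) by nra.
      unfold Rdiv in *. nra. }
    assert (HzS : tau * Rabs (snd z) <= PI).
    { apply Rmult_le_compat_l with (r := tau) in Hz; [|lra].
      replace (tau * (PI / tau)) with PI in Hz by (field; lra). lra. }
    assert (Hneg : PI * cos theta / sin theta <= 0).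
    { unfold Rdiv. pose proof PI_gt_3. assert (0 < / sin theta) by (apply Rinv_0_lt_compat; auto). assert (PI * cos theta < 0) by nra. nra. }
    destruct HG as [[phi [Hphi Ez]]|[r [Hr [Ez|Ez]]]]; rewrite Ez in *; simpl in *.
    - destruct (Rlt_or_le (cos phi) 0) as [Hc|Hc].
      + destruct (arc_aux phi theta (conj Ht1 Ht3) Hphi Hc) as [HS HC'].
        apply (Hgen kappa (cos phi) (Rabs (sin phi))); auto; try lra.
        rewrite Rabs_mult, (Rabs_right kappa) in HzS by lra. lra.
      + assert (0 <= tau * (kappa * cos phi)) by (apply Rmult_le_pos; [lra|]; apply Rmult_le_pos; lra). lra.
    - apply (Hgen r (cos theta) (sin theta)); try lra.
      rewrite Rabs_mult, (Rabs_right r), (Rabs_right (sin theta)) in HzS by lra. lra.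
    - apply (Hgen r (cos theta) (sin theta)); try lra.
      rewrite Rabs_Ropp, Rabs_mult, (Rabs_right r), (Rabs_right (sin theta)) in HzS by lra. lra. }
  specialize (Hcore w Hw0 Hwy Hwx).
  assert (Hxi : Cexp (Cmult (RtoC (- tau)) z) = Ex 1 w).
  { unfold Ex, w. f_equal. change (INR 1) with 1. apply injective_projections; simpl; ring. }
  assert (Htl : 0 < tau ^ S l) by (apply pow_lt; lra).
  assert (HE : Cminus (Cmult (Cdiv (gamma l (Cexp (Cmult (RtoC (- tau)) z))) (RtoC (INR (fact l))))
                        (RtoC (tau ^ (S l)))) (Cinv (Cpow z (S l)))
               = Cmult (RtoC (tau ^ S l)) (Ff l w)).
  { rewrite Hxi. unfold Ff, w. rewrite Cpow_mult_l, <- RtoC_pow.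
    pose proof (Cpow_nz _ (S l) Hz0). pose proof (RtoC_neq _ (INR_fact_neq_0 l)).
    assert (RtoC (tau ^ S l) <> RtoC 0) by (apply RtoC_neq; lra).
    field. auto. }
  rewrite HE, Cmod_mult, Cmod_R, Rabs_right by lra.
  assert (Hwm : Cmod w = tau * Cmod z).
  { unfold w. rewrite Cmod_mult, Cmod_R, Rabs_right by lra. reflexivity. }
  destruct (Nat.eqb l 0 || Nat.odd l)%bool.
  - assert (tau ^ S l * Cmod (Ff l w) <= tau ^ S l * (C * 1)) by (apply Rmult_le_compat_l; lra). lra.
  - rewrite Hwm in Hcore.
    assert (tau ^ S l * Cmod (Ff l w) <= tau ^ S l * (C * (tau * Cmod z))) by (apply Rmult_le_compat_l; lra).
    replace (C * tau ^ S (S l) * Cmod z) with (tau ^ S l * (C * (tau * Cmod z))) by (simpl; ring). lra.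
Qed.
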